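(* Let $\Sigma\in\mathcal{G}_n$, let $Q_0$ be the unique regular rational orthogonal matrix with $Q_0^{\rm T}S(\Sigma)Q_0=S(\Sigma^{\rm T})$, with level $\ell_0$, and set $\bar Q_0=\ell_0Q_0$. Let $p$ be an odd prime with $p\nmid\ell_0$. Then, over $\mathbb{F}_p$: if $n$ is even, $\mathrm{rank}(\ell_0I-\bar Q_0)=\mathrm{rank}(\ell_0I+\bar Q_0)=\frac n2$; if $n$ is odd, $\mathrm{rank}(\ell_0I-\bar Q_0)=\frac{n-1}2$ and $\mathrm{rank}(\ell_0I+\bar Q_0)=\frac{n+1}2$.
   Context: An oriented graph on vertices $v_1,\dots,v_n$ is a simple graph with each edge directed; its skew-adjacency matrix $S(\Sigma)=(s_{ij})$ has $s_{ij}=1$ if $(v_i,v_j)$ is an arc, $-1$ if $(v_j,v_i)$ is an arc, $0$ otherwise. The converse $\Sigma^{\rm T}$ reverses every arc, so $S(\Sigma^{\rm T})=-S(\Sigma)$. With $e$ the all-one vector, $W(\Sigma)=[e,Se,\dots,S^{n-1}e]$, $S=S(\Sigma)$. $\mathcal{G}_n$ is the set of $n$-vertex oriented graphs with $2^{-\lfloor n/2\rfloor}\det W(\Sigma)$ an odd square-free integer. A rational orthogonal matrix $Q$ is regular if $Qe=e$; its level is the least positive integer $k$ with $kQ$ integral. Since $\det W(\Sigma)\neq0$, $Q_0$ exists and is unique. *)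

(* Defs.v *)
From HB Require Import structures.
From mathcomp Require Import all_boot all_order all_algebra.
Set Implicit Arguments. Unset Strict Implicit. Unset Printing Implicit Defensive.
Import Order.TTheory GRing.Theory Num.Theory.
Local Open Scope ring_scope.

Definition oriented_graph (n : nat) (arc : rel 'I_n) : Prop :=
  forall i j : 'I_n, ~~ (arc i j && arc j i).

Definition skew_adj (n : nat) (arc : rel 'I_n) : 'M[int]_n :=
  \matrix_(i, j) (if arc i j then 1 else if arc j i then -1 else 0).

Definition ones (R : nzRingType) (n : nat) : 'cV[R]_n := const_mx 1.

Definition walk_mx (n : nat) (arc : rel 'I_n) : 'M[int]_n :=
  \matrix_(i, k) (iter k (mulmx (skew_adj arc)) (ones int n)) i 0.

Definition squarefree (m : nat) : bool :=
  [forall p : 'I_m.+1, prime p ==> ~~ (p ^ 2 %| m)%N].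

Definition in_Gn (n : nat) (arc : rel 'I_n) : Prop :=
  exists m : int, \det (walk_mx arc) = (2 ^ n./2)%N%:Z * m
                  /\ odd `|m|%N /\ squarefree `|m|%N.

Definition regular_orthogonal (n : nat) (Q : 'M[rat]_n) : Prop :=
  Q *m Q^T = 1%:M /\ Q *m ones rat n = ones rat n.

Definition integral_mx (n : nat) (A : 'M[rat]_n) : bool :=
  [forall i, forall j, A i j \is a Num.int].

Definition is_level (n : nat) (Q : 'M[rat]_n) (l : nat) : Prop :=
  (0 < l)%N /\ integral_mx (l%:R *: Q) /\
  forall k : nat, (0 < k)%N -> (k < l)%N -> ~~ integral_mx (k%:R *: Q).

(* Main.v *)
Require Import Defs.
From HB Require Import structures.
From mathcomp Require Import all_boot all_order all_algebra.
From mathcomp Require Import zify.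
Import Order.TTheory GRing.Theory Num.Theory.
Local Open Scope ring_scope.

Lemma rank_transfer (F : fieldType) n (A : 'M[int]_n) :
  (\rank (map_mx (intr : int -> F) A) <= \rank (map_mx (intr : int -> rat) A))%N.
Proof.
set Ap := map_mx _ A; set Aq := map_mx _ A.
set r := \rank Ap.
pose f := maxrankfun Ap.
have hB : row_full (rowsub f Ap)^T.
  by rewrite /row_full mxrank_tr; exact: maxrowsub_free.
pose g := fullrankfun hB.
pose M := rowsub g (rowsub f A)^T.
have hC : map_mx (intr : int -> F) M = rowsub g (rowsub f Ap)^T.
  by apply/matrixP => i j; rewrite !mxE.
have hCq : map_mx (intr : int -> rat) M = rowsub g (rowsub f Aq)^T.
  by apply/matrixP => i j; rewrite !mxE.
have hu := fullrowsub_unit hB.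
rewrite -/g -hC unitmxE det_map_mx unitfE in hu.
have hM : \det M != 0 by apply: contraNneq hu => ->; rewrite rmorph0.
have huq : map_mx (intr : int -> rat) M \in unitmx.
  by rewrite unitmxE det_map_mx unitfE intr_eq0.
rewrite -[r](mxrank_unit huq) hCq.
apply: leq_trans (mxrankS (rowsub_sub _ _)) _.
by rewrite mxrank_tr; apply: mxrankS; apply: rowsub_sub.
Qed.

Lemma rank_le_img (F : fieldType) m n k (M : 'M[F]_(m,n)) (h : 'I_k -> 'I_m) :
  (forall i, row i M != 0 -> exists j, h j = i) -> (\rank M <= k)%N.
Proof.
move=> H.
have hs : (M <= rowsub h M)%MS.
  apply/row_subP => i; case: (eqVneq (row i M) 0) => [->|/H [j <-]].
    by rewrite sub0mx.
  by rewrite -row_rowsub row_sub.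
exact: leq_trans (mxrankS hs) (rank_leq_row _).
Qed.

Theorem lemma3p7 (n : nat) (arc : rel 'I_n) (Q0 : 'M[rat]_n) (l0 : nat)
    (Qbar0 : 'M[int]_n) (p : nat) :
  oriented_graph arc -> in_Gn arc ->
  regular_orthogonal Q0 ->
  Q0^T *m map_mx intr (skew_adj arc) *m Q0 = - map_mx intr (skew_adj arc) ->
  is_level Q0 l0 ->
  map_mx intr Qbar0 = l0%:R *: Q0 ->
  prime p -> odd p -> ~~ (p %| l0)%N ->
  let Qp := map_mx (fun z : int => z%:~R : 'F_p) Qbar0 in
  let lp := (l0%:R : 'F_p)%:M : 'M['F_p]_n in
  if ~~ odd n then
    \rank (lp - Qp)%R = n./2 /\ \rank (lp + Qp)%R = n./2
  else
    \rank (lp - Qp)%R = (n - 1)./2 /\ \rank (lp + Qp)%R = (n + 1)./2.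
Proof.
move=> _ [m [hdet [hodd _]]] [hQQ hQe] hS [hl0 _] hQbar hp hpodd hpl Qp lp.
set S := map_mx intr (skew_adj arc) in hS.
have SQ : Q0 *m S = - (S *m Q0).
  have h : Q0 *m (Q0^T *m S *m Q0) = Q0 *m (- S) by rewrite hS.
  rewrite !mulmxA hQQ mul1mx mulmxN in h.
  by rewrite h opprK.
pose e := ones rat n.
pose v k := iter k (mulmx S) e.
have Qv k : Q0 *m v k = (-1) ^+ k *: v k.
  elim: k => [|k IH]; first by rewrite expr0 scale1r; exact hQe.
  rewrite /v iterS -/(v k) mulmxA SQ mulNmx -mulmxA IH.
  by rewrite -scalemxAr exprS mulN1r scaleNr.
pose Wq := \matrix_(i, k < n) v k i 0.
have hiter k : map_mx intr (iter k (mulmx (skew_adj arc)) (ones int n)) = v k.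
  elim: k => [|k IH] /=.
    by apply/matrixP => i j; rewrite !mxE.
  by rewrite map_mxM IH.
have hW : map_mx intr (walk_mx arc) = Wq.
  apply/matrixP=> i k; rewrite !mxE.
  by have := congr1 (fun M : 'cV[rat]_n => M i 0) (hiter k); rewrite /= mxE.
have Wu : Wq \in unitmx.
  rewrite -hW unitmxE det_map_mx unitfE intr_eq0 hdet mulf_eq0 negb_or.
  apply/andP; split; first by rewrite eqz_nat expn_eq0.
  by apply: contraTneq hodd => ->.
have colW j : col j Wq = v j by apply/colP => i; rewrite !mxE.
have colX (s : rat) j : col j ((1%:M + s *: Q0) *m Wq) = (1 + s * (-1) ^+ j) *: col j Wq.
  by rewrite colE -mulmxA -colE colW mulmxDl mul1mx -scalemxAl Qv scalerA scalerDl scale1r.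
have rkX (s : rat) k (h : 'I_k -> 'I_n) :
   (forall j : 'I_n, 1 + s * (-1) ^+ j != 0 -> exists i, h i = j) ->
   (\rank (1%:M + s *: Q0)%R <= k)%N.
  move=> H.
  rewrite -(mxrankMfree _ (_ : row_free Wq)); last by rewrite row_free_unit.
  rewrite -mxrank_tr; apply: (@rank_le_img _ _ _ _ _ h) => j.
  rewrite -tr_col colX => hj; apply: H; apply: contraNneq hj => ->.
  idtac.
  by rewrite scale0r trmx0.
have rkm : (\rank (1%:M + (-1) *: Q0)%R <= n./2)%N.
  have hb (k : 'I_(n./2)) : (k.*2.+1 < n)%N.
    by have := odd_double_half n; have := ltn_ord k; lia.
  apply: (rkX _ _ (fun k => Ordinal (hb k))) => j.
  rewrite mulN1r -signr_odd; case ho: (odd j); last by rewrite expr0 subrr eqxx.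
  move=> _; have hk : (j./2 < n./2)%N.
    by have := odd_double_half n; have := odd_double_half j; rewrite ho; have := ltn_ord j; lia.
  exists (Ordinal hk); apply: val_inj => /=.
  by have := odd_double_half j; rewrite ho; lia.
have rkp : (\rank (1%:M + 1 *: Q0)%R <= uphalf n)%N.
  have hb (k : 'I_(uphalf n)) : (k.*2 < n)%N.
    by have := odd_double_half n; have := uphalf_half n; have := ltn_ord k; lia.
  apply: (rkX _ _ (fun k => Ordinal (hb k))) => j.
  rewrite mul1r -signr_odd; case ho: (odd j); first by rewrite expr1 addrN eqxx.
  move=> _; have hk : (j./2 < uphalf n)%N.
    by have := odd_double_half n; have := uphalf_half n; have := odd_double_half j; rewrite ho; have := ltn_ord j; lia.
  exists (Ordinal hk); apply: val_inj => /=.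
  by have := odd_double_half j; rewrite ho; lia.
have hlq : (l0%:R : rat) != 0 by rewrite pnatr_eq0 -lt0n.
have eqA : map_mx (intr : int -> rat) ((l0%:Z)%:M - Qbar0) = l0%:R *: (1%:M + (-1) *: Q0).
  by rewrite map_mxB map_scalar_mx hQbar scaleN1r scalerBr scalemx1.
have eqB : map_mx (intr : int -> rat) ((l0%:Z)%:M + Qbar0) = l0%:R *: (1%:M + 1 *: Q0).
  by rewrite map_mxD map_scalar_mx hQbar scale1r scalerDr scalemx1.
have eqAp : lp - Qp = map_mx (intr : int -> 'F_p) ((l0%:Z)%:M - Qbar0).
  by rewrite map_mxB map_scalar_mx.
have eqBp : lp + Qp = map_mx (intr : int -> 'F_p) ((l0%:Z)%:M + Qbar0).
  by rewrite map_mxD map_scalar_mx.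
have rA : (\rank (lp - Qp)%R <= n./2)%N.
  rewrite eqAp; apply: leq_trans (rank_transfer _ _ _) _.
  by rewrite eqA mxrank_scale_nz.
have rB : (\rank (lp + Qp)%R <= uphalf n)%N.
  rewrite eqBp; apply: leq_trans (rank_transfer _ _ _) _.
  by rewrite eqB mxrank_scale_nz.
have hsum : (n <= \rank (lp - Qp)%R + \rank (lp + Qp)%R)%N.
  apply: leq_trans (mxrank_add _ _).
  have -> : (lp - Qp) + (lp + Qp) = (l0.*2)%:R *: (1%:M : 'M['F_p]_n).
    rewrite addrACA addNr addr0 /lp scalemx1 -addnn natrD.
    by apply/matrixP => i j; rewrite !mxE mulrnDl.
  rewrite mxrank_scale_nz ?mxrank1 //.
  rewrite -(dvdn_pcharf (pchar_Fp hp)) -muln2 Euclid_dvdM // negb_or hpl /=.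
  apply/negP => /(@dvdn_leq p 2 isT) h2.
  have hp2 : p = 2%N by have := prime_gt1 hp; lia.
  by rewrite hp2 in hpodd.
have := uphalf_half n; have := odd_double_half n.
case: (odd n) => /= h1 h2; split; lia.
Qed.
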